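(* Let $R$ be a commutative ring which is free as an abelian group with $\mathbb{Z}$-basis $V$, let $n\ge2$ and $p$ a prime, and write $\Gamma_m=\Gamma(SL_n(R),p^m)$. Suppose $|V|<\infty$ or $s=1$. Then for all $r\ge s\ge1$, $$\Gamma_r/\Gamma_{r+s}\cong\bigoplus_{n^2-1}\mathbb{Z}/p^s\mathbb{Z}[V].$$
   Context: $\Gamma(SL_n(R),p^m)=\ker\big(SL_n(R)\to SL_n(R\otimes_{\mathbb{Z}}\mathbb{Z}/p^m)\big)$. $\mathbb{Z}/p^s\mathbb{Z}[V]$ denotes the free $\mathbb{Z}/p^s$-module with basis $V$ (equivalently the additive group of $R/p^sR$); the right-hand side is a direct sum of $n^2-1$ copies of it. *)

(* Defs.v *)
From mathcomp Require Import all_boot all_order all_algebra.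
Set Implicit Arguments. Unset Strict Implicit. Unset Printing Implicit Defensive.
Import GRing.Theory.
Local Open Scope ring_scope.

Definition is_Zbasis (R : comPzRingType) (I : eqType) (b : I -> R) : Prop :=
  (forall x : R, exists (e : seq I) (c : I -> int),
      x = \sum_(i <- e) (b i) *~ (c i)) /\
  (forall (e : seq I) (c : I -> int), uniq e ->
      \sum_(i <- e) (b i) *~ (c i) = 0 -> forall i, i \in e -> c i = 0).

Definition in_pmR (R : comPzRingType) (p m : nat) (x : R) : Prop :=
  exists y : R, x = (p ^ m)%N%:R * y.

(* Gamma(SL_n(R), p^m) = ker(SL_n(R) -> SL_n(R/p^m R)) : matrices of
   determinant 1 that are congruent to the identity modulo p^m R. *)
Definition in_Gamma (R : comPzRingType) (n p m : nat) (A : 'M[R]_n) : Prop :=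
  \det A = 1 /\ forall i j, in_pmR p m ((A - 1%:M) i j).

(* Finitely supported elements of the product over 'I_k x I of Z/p^s:
   these form the direct sum of k copies of (Z/p^s Z)[I]. *)
Definition fin_supp (I : eqType) (k q : nat) (f : 'I_k -> I -> 'Z_q) : Prop :=
  exists e : seq I, forall j v, f j v != 0 -> v \in e.

(* Main.v *)
From Stdlib Require Import ClassicalEpsilon.
Require Import Defs.
From mathcomp Require Import all_boot all_order all_algebra ring zify.
Import GRing.Theory Num.Theory.
Local Open Scope ring_scope.

Section Basis.
Variables (R : comPzRingType) (I : eqType) (b : I -> R).
Hypothesis hb : is_Zbasis b.

Definition bcomb (e : seq I) (c : I -> int) : R := \sum_(i <- e) b i *~ c i.
Definition grp (e : seq I) (c : I -> int) (v : I) : int := \sum_(i <- e | i == v) c i.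

Lemma grp_notin e c v : v \notin e -> grp e c v = 0.
Proof.
move=> hv; rewrite /grp big_seq_cond big1 // => i /andP[ie /eqP iv].
by move: hv; rewrite -iv ie.
Qed.

Lemma grp_uniq E g v : uniq E -> grp E g v = if v \in E then g v else 0.
Proof.
elim: E => [|x E IH] /=; first by rewrite /grp big_nil.
case/andP=> xE uE; rewrite /grp big_cons -/(grp E g v) IH // in_cons.
case: eqP => [<-|/eqP nxv]; first by rewrite eqxx (negbTE xE) addr0.
by rewrite eq_sym (negbTE nxv).
Qed.

Lemma comb_grp e c E : uniq E -> {subset e <= E} -> bcomb e c = bcomb E (grp e c).
Proof.
move=> uE sE; rewrite /bcomb.
transitivity (\sum_(i <- e) \sum_(v <- E | v == i) b i *~ c i).
  rewrite big_seq [RHS]big_seq; apply: eq_bigr => i ie.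
  have := grp_uniq E (fun _ => 1) i uE; rewrite sE // /grp => h.
  rewrite -mulrz_sumr.
  congr (_ *~ _).
  by rewrite -[c i in LHS]mulr1 -h mulr_sumr; under eq_bigr do rewrite mulr1.
under eq_bigr => i _ do rewrite big_mkcond.
rewrite exchange_big /=; apply: eq_bigr => v _.
rewrite /grp mulrz_sumr [RHS]big_mkcond /=; apply: eq_bigr => i _.
by rewrite eq_sym; case: eqP => // ->.
Qed.

Lemma comb_uniq e c e' c' : bcomb e c = bcomb e' c' -> forall v, grp e c v = grp e' c' v.
Proof.
set E := undup (e ++ e').
have uE : uniq E by rewrite undup_uniq.
have s1 : {subset e <= E} by move=> i ie; rewrite mem_undup mem_cat ie.
have s2 : {subset e' <= E} by move=> i ie; rewrite mem_undup mem_cat ie orbT.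
rewrite (comb_grp _ c _ uE s1) (comb_grp _ c' _ uE s2) => h v.
have h0 : bcomb E (fun w => grp e c w - grp e' c' w) = 0.
  rewrite /bcomb; under eq_bigr do rewrite mulrzBr.
  by rewrite sumrB -/(bcomb E _) -/(bcomb E _) h subrr.
case vE: (v \in E).
  by apply/eqP; rewrite -subr_eq0; apply/eqP; exact: hb.2 _ _ uE h0 v vE.
have ve : v \notin e by apply/negP => /s1; rewrite vE.
have ve' : v \notin e' by apply/negP => /s2; rewrite vE.
by rewrite !grp_notin.
Qed.

Definition brep (x : R) : seq I * (I -> int) :=
  epsilon (inhabits ([::], fun _ => 0)) (fun ec => x = bcomb ec.1 ec.2).

Lemma repP x : x = bcomb (brep x).1 (brep x).2.
Proof.
rewrite /brep; apply: (epsilon_spec (inhabits ([::], fun _ => 0)) (fun ec => x = bcomb ec.1 ec.2)).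
by have [e [c h]] := hb.1 x; exists (e, c).
Qed.

Definition bcoord (x : R) (v : I) : int := grp (brep x).1 (brep x).2 v.

Lemma coord_comb e c v : bcoord (bcomb e c) v = grp e c v.
Proof. by apply: comb_uniq; rewrite -repP. Qed.

Lemma coord_supp x v : bcoord x v != 0 -> v \in (brep x).1.
Proof. by apply: contraR => h; rewrite /bcoord grp_notin. Qed.

Lemma repE x E : uniq E -> {subset (brep x).1 <= E} -> x = bcomb E (bcoord x).
Proof. by move=> uE sE; have := repP x; rewrite (comb_grp _ _ _ uE sE). Qed.

Lemma coordD x y v : bcoord (x + y) v = bcoord x v + bcoord y v.
Proof.
set E := undup ((brep x).1 ++ (brep y).1).
have uE : uniq E by rewrite undup_uniq.
have s1 : {subset (brep x).1 <= E} by move=> i ie; rewrite mem_undup mem_cat ie.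
have s2 : {subset (brep y).1 <= E} by move=> i ie; rewrite mem_undup mem_cat ie orbT.
have -> : x + y = bcomb E (fun w => bcoord x w + bcoord y w).
  transitivity (bcomb E (bcoord x) + bcomb E (bcoord y)).
    by congr (_ + _); apply: repE.
  by rewrite /bcomb -big_split; apply: eq_bigr => i _; rewrite mulrzDr.
rewrite coord_comb grp_uniq //; case vE: (v \in E) => //.
have ve : v \notin (brep x).1 by apply/negP => /s1; rewrite vE.
have ve' : v \notin (brep y).1 by apply/negP => /s2; rewrite vE.
by rewrite /bcoord !grp_notin ?addr0.
Qed.

Lemma coord0 v : bcoord 0 v = 0.
Proof. by apply: (addrI (bcoord 0 v)); rewrite -coordD !addr0. Qed.

Lemma coordN x v : bcoord (- x) v = - bcoord x v.
Proof. by apply: (addrI (bcoord x v)); rewrite -coordD !subrr coord0. Qed.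

Lemma coordB x y v : bcoord (x - y) v = bcoord x v - bcoord y v.
Proof. by rewrite coordD coordN. Qed.

Lemma coordMn x k v : bcoord (x *+ k) v = bcoord x v *+ k.
Proof. by elim: k => [|k IH]; rewrite ?mulr0n ?coord0 // !mulrS coordD IH. Qed.

Lemma eq0_coord x : (forall v, bcoord x v = 0) -> x = 0.
Proof.
move=> h; rewrite (@repE x (undup (brep x).1)) ?undup_uniq //; last by move=> i; rewrite mem_undup.
by rewrite /bcomb big1 // => i _; rewrite h mulr0z.
Qed.

Lemma torsion (x : R) k : (0 < k)%N -> x *+ k = 0 -> x = 0.
Proof.
move=> k0 h; apply: eq0_coord => v; have := coordMn x k v.
rewrite h coord0 => /esym/eqP; rewrite mulrn_eq0 eqn0Ngt k0 /=; by move/eqP.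
Qed.

Variable p : nat.

Lemma J_coord m x : in_pmR p m x <-> forall v, ((p ^ m)%N %| bcoord x v)%Z.
Proof.
split.
  case=> y -> v; rewrite mulr_natl coordMn -mulr_natr natz.
  by apply: dvdz_mull; rewrite dvdzz.
move=> h; set E := undup (brep x).1.
exists (bcomb E (fun v => (bcoord x v %/ (p ^ m)%N)%Z)).
rewrite {1}(@repE x E) ?undup_uniq //; last by move=> i; rewrite mem_undup.
rewrite /bcomb mulr_sumr; apply: eq_bigr => i _.
by rewrite -{1}(divzK (h i)) mulrzA -pmulrn mulr_natl.
Qed.

End Basis.
Arguments bcoord {R I} b x v.
Arguments bcomb {R I} b e c.
Arguments brep {R I} b x.
Arguments coordD {R I b} hb x y v.
Arguments coordN {R I b} hb x v.
Arguments coordB {R I b} hb x y v.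
Arguments coordMn {R I b} hb x k v.
Arguments coord0 {R I b} hb v.
Arguments eq0_coord {R I b} hb x _.
Arguments torsion {R I b} hb x k _ _.
Arguments J_coord {R I b} hb p m x.
Arguments coord_comb {R I b} hb e c v.
Arguments coord_supp {R I b} x v _.
Arguments grp_uniq {I} E g v _.

Lemma Zq_eq0 q (z : int) : (1 < q)%N -> ((z%:~R : 'Z_q) = 0) <-> (q %| z)%Z.
Proof.
move=> q1; have H k : ((k%:R : 'Z_q) == 0) = (q %| k)%N.
  by rewrite -val_eqE /= val_Zp_nat.
case: z => k; rewrite dvdzE /=.
  by rewrite -pmulrn; split; [move/eqP; rewrite H | rewrite -H => /eqP].
rewrite NegzE mulrNz -pmulrn; split.
  by move/eqP; rewrite oppr_eq0 H.
by rewrite -H => /eqP ->; rewrite oppr0.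
Qed.

Lemma Zq_cong q (z1 z2 : int) : (1 < q)%N -> (q %| z1 - z2)%Z ->
  (z1%:~R : 'Z_q) = z2%:~R.
Proof.
move=> q1 h; apply/eqP; rewrite -subr_eq0 -intrB; apply/eqP; exact/Zq_eq0.
Qed.

Section J.
Variables (R : comPzRingType) (p : nat).
Local Notation J m x := (@in_pmR R p m x).

Lemma J0 m : J m 0.
Proof. by exists 0; rewrite mulr0. Qed.
Lemma JD m x y : J m x -> J m y -> J m (x + y).
Proof. by case=> x' -> [y' ->]; exists (x' + y'); rewrite mulrDr. Qed.
Lemma JN m x : J m x -> J m (- x).
Proof. by case=> x' ->; exists (- x'); rewrite mulrN. Qed.
Lemma JB m x y : J m x -> J m y -> J m (x - y).
Proof. by move=> hx hy; apply: JD => //; apply: JN. Qed.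
Lemma JMr m x y : J m x -> J m (x * y).
Proof. by case=> x' ->; exists (x' * y); rewrite mulrA. Qed.
Lemma JMl m x y : J m y -> J m (x * y).
Proof. by rewrite mulrC; apply: JMr. Qed.
Lemma JMM m1 m2 x y : J m1 x -> J m2 y -> J (m1 + m2) (x * y).
Proof.
by case=> x' -> [y' ->]; exists (x' * y'); rewrite expnD natrM mulrACA.
Qed.
Lemma Jle m1 m2 x : (m2 <= m1)%N -> J m1 x -> J m2 x.
Proof.
move=> le [x' ->]; exists ((p ^ (m1 - m2))%N%:R * x').
by rewrite mulrA -natrM -expnD subnKC.
Qed.
Lemma Jnat m : J m (p ^ m)%N%:R.
Proof. by exists 1; rewrite mulr1. Qed.
Lemma Jsum m (T : Type) (rr : seq T) (P : pred T) (F : T -> R) :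
  (forall i, P i -> J m (F i)) -> J m (\sum_(i <- rr | P i) F i).
Proof. move=> h; apply: big_ind => //; [exact: J0 | exact: JD]. Qed.

Lemma prod_cong m (T : Type) (rr : seq T) (a d : T -> R) :
  (forall i, J m (d i)) ->
  J m (\prod_(i <- rr) (a i + d i) - \prod_(i <- rr) a i).
Proof.
move=> hd; elim: rr => [|x rr IH]; first by rewrite !big_nil subrr; exact: J0.
rewrite !big_cons.
have -> : (a x + d x) * \prod_(j <- rr) (a j + d j) - a x * \prod_(j <- rr) a j =
  a x * (\prod_(j <- rr) (a j + d j) - \prod_(j <- rr) a j) +
  d x * \prod_(j <- rr) (a j + d j) by ring.
by apply: JD; [apply: JMl | apply: JMr].
Qed.

Lemma det_cong m n (M N : 'M[R]_n) : (forall i j, J m (N i j)) ->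
  J m (\det (M + N) - \det M).
Proof.
move=> hN; rewrite /determinant -sumrB; apply: Jsum => sg _.
rewrite -mulrBr; apply: JMl.
under eq_bigr do rewrite mxE.
exact: prod_cong.
Qed.

End J.

Lemma ord_ltn_eqF {m} {u w : 'I_m} : (u < w)%N -> (u == w) = false.
Proof. by move=> uw; apply/eqP => e; move: uw; rewrite e ltnn. Qed.

Section Det.
Variables (R : comPzRingType) (n' : nat).
Local Notation n := n'.+1.

Lemma det_elem_lt (c : R) (i k : 'I_n) : (k < i)%N ->
  \det (1%:M + c *: delta_mx i k) = 1.
Proof.
move=> ki; rewrite det_trig.
  rewrite big1 // => u _; rewrite !mxE eqxx.
  case: (u =P i) => [->|] /=; last by rewrite mulr0 addr0.
  have -> : (i == k) = false by apply/eqP => e; move: ki; rewrite e ltnn.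
  by rewrite mulr0 addr0.
apply/is_trig_mxP => u w uw; rewrite !mxE (ord_ltn_eqF uw) /=.
case: eqP => [ui|]; case: eqP => [wk|] //=; rewrite ?mulr0 ?addr0 //.
by move: uw; rewrite ui wk => /(ltn_trans ki); rewrite ltnn.
Qed.

Lemma det_elem (c : R) (i k : 'I_n) : i != k ->
  \det (1%:M + c *: delta_mx i k) = 1.
Proof.
move=> ik; case: (ltngtP k i) => [ki|ik'|e]; first exact: det_elem_lt.
  rewrite -det_tr linearD /= linearZ /= trmx_delta tr_scalar_mx.
  exact: det_elem_lt.
by move: ik; rewrite (val_inj e) eqxx.
Qed.

Lemma det_diag1 (c : R) (l : 'I_n) : \det (1%:M + c *: delta_mx l l) = 1 + c.
Proof.
rewrite det_trig; last first.
  apply/is_trig_mxP => u w uw; rewrite !mxE (ord_ltn_eqF uw) /=.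
  case: eqP => [ul|]; case: eqP => [wl|] //=; rewrite ?mulr0 ?addr0 //.
  by move: uw; rewrite ul wl ltnn.
rewrite (bigD1 l) //= big1 ?mulr1 => [|u ul]; rewrite !mxE !eqxx ?mulr1 //.
by rewrite (negbTE ul) mulr0 addr0.
Qed.

Lemma prod_formula (a : R) (i l : 'I_n) : i != l ->
  (1%:M + (-1) *: delta_mx l i) *m (1%:M + a *: delta_mx i l) *m (1%:M + 1 *: delta_mx l i) =
  1%:M + a *: (delta_mx i i + delta_mx i l - delta_mx l i - delta_mx l l) :> 'M[R]_n.
Proof.
move=> il; rewrite scaleN1r scale1r.
rewrite !(mulmxDl, mulmxDr, mulmxBl, mulmxBr, mul1mx, mulmx1, mulNmx).
rewrite -!scalemxAl -!scalemxAr !mul_delta_mx (mul_delta_mx_0 _ _ _ il) -!scalemxAl !mul_delta_mx.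
apply/matrixP => u w; rewrite !mxE; ring.
Qed.

End Det.

Section Mat.
Variables (R : comPzRingType) (I : eqType) (b : I -> R).
Hypothesis hb : is_Zbasis b.
Variables (p r s : nat).
Hypotheses (hp : prime p) (s0 : (0 < s)%N) (sr : (s <= r)%N).
Variable n' : nat.
Local Notation n := n'.+1.
Local Notation J m x := (@in_pmR R p m x).
Local Notation Pm := (p ^ r)%N.

Lemma p_gt0 : (0 < p)%N. Proof. exact: prime_gt0. Qed.
Lemma Pm_gt0 : (0 < Pm)%N. Proof. by rewrite expn_gt0 p_gt0. Qed.

Lemma Jdiv m y : J (r + m) (Pm%:R * y) -> J m y.
Proof.
rewrite !(J_coord hb) => h v; have := h v.
rewrite mulr_natl (coordMn hb) pmulrn mulrzz expnD mulnC PoszM dvdz_mul2r //.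
by rewrite eqz_nat -lt0n Pm_gt0.
Qed.

Lemma JPm m y : J m y -> J (r + m) (Pm%:R * y).
Proof. by apply: JMM; apply: Jnat. Qed.

Definition Xe (A : 'M[R]_n) i k : R :=
  epsilon (inhabits 0) (fun y => (A - 1%:M) i k = Pm%:R * y).

Lemma XeP A i k y : (A - 1%:M) i k = Pm%:R * y -> Xe A i k = y.
Proof.
move=> h.
have := epsilon_spec (inhabits 0) (fun y => (A - 1%:M) i k = Pm%:R * y) (ex_intro _ y h).
rewrite -/(Xe A i k) h => /eqP; rewrite -subr_eq0 -mulrBr mulr_natl => /eqP.
move/(torsion hb _ _ Pm_gt0)/eqP; rewrite subr_eq0 => /eqP ->. by [].
Qed.

Lemma XeG A : in_Gamma p r A -> forall i k, (A - 1%:M) i k = Pm%:R * Xe A i k.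
Proof. by case=> _ h i k; have [y hy] := h i k; rewrite (@XeP A i k y hy). Qed.

Lemma mulB1 (A B : 'M[R]_n) :
  A *m B - 1%:M = (A - 1%:M) + (B - 1%:M) + (A - 1%:M) *m (B - 1%:M).
Proof.
rewrite mulmxBl !mulmxBr !mul1mx mulmx1.
apply/matrixP => u w; rewrite !mxE; ring.
Qed.

Lemma GammaM (A B : 'M[R]_n) : in_Gamma p r A -> in_Gamma p r B -> in_Gamma p r (A *m B).
Proof.
move=> [dA hA] [dB hB]; split; first by rewrite mulmxE detM dA dB mulr1.
move=> i k; rewrite mulB1.
move: (A - 1%:M) (B - 1%:M) hA hB => A1 B1 hA hB.
rewrite !mxE; apply: JD; first exact: JD.
apply: Jsum => j _; apply: (@Jle _ _ (r + r)); first exact: leq_addr.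
exact: JMM.
Qed.

Lemma XeM (A B : 'M[R]_n) : in_Gamma p r A -> in_Gamma p r B -> forall i k,
  Xe (A *m B) i k = Xe A i k + Xe B i k + Pm%:R * \sum_j Xe A i j * Xe B j k.
Proof.
move=> hA hB i k; apply: XeP.
have hA' := @XeG A hA; have hB' := @XeG B hB.
rewrite mulB1; move: (A - 1%:M) (B - 1%:M) hA' hB' => A1 B1 hA' hB'.
rewrite !mxE hA' hB'; under eq_bigr do rewrite hA' hB'.
have -> : \sum_j (Pm%:R * Xe A i j) * (Pm%:R * Xe B j k) =
   Pm%:R * (Pm%:R * \sum_j Xe A i j * Xe B j k) :> R.
  by rewrite !mulr_sumr; apply: eq_bigr => j _; ring.
ring.
Qed.

Definition S (X : 'M[R]_n) := exists A, in_Gamma p r A /\ forall i k, J (r + s) ((A - 1%:M) i k - Pm%:R * X i k).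

Lemma S0 : S 0.
Proof.
exists 1%:M; split; first split.
- exact: det1.
- by move=> i k; rewrite subrr mxE; apply: J0.
by move=> i k; rewrite subrr !mxE mulr0 subrr; apply: J0.
Qed.

Lemma SD X Y : S X -> S Y -> S (X + Y).
Proof.
move=> [A [hA eA]] [B [hB eB]]; exists (A *m B); split; first exact: GammaM.
move=> i k; rewrite mulB1.
have gA : forall i k, J r ((A - 1%:M) i k) by case: hA.
have gB : forall i k, J r ((B - 1%:M) i k) by case: hB.
move: (eA i k) (eB i k).
move: (A - 1%:M) (B - 1%:M) gA gB => A1 B1 gA gB ha hb'.
rewrite !mxE.
have -> : A1 i k + B1 i k + \sum_j A1 i j * B1 j k - Pm%:R * (X i k + Y i k) =
  (A1 i k - Pm%:R * X i k) + (B1 i k - Pm%:R * Y i k) + \sum_j A1 i j * B1 j k by ring.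
apply: JD; first exact: JD.
apply: Jsum => j _; apply: (@Jle _ _ (r + r)); first by rewrite leq_add2l.
exact: JMM.
Qed.

Lemma Ssum (T : Type) (rr : seq T) (P : pred T) (F : T -> 'M[R]_n) :
  (forall i, P i -> S (F i)) -> S (\sum_(i <- rr | P i) F i).
Proof. move=> h; apply: big_ind => //; [exact: S0 | exact: SD]. Qed.

Lemma Selem x (i k : 'I_n) : i != k -> S (x *: delta_mx i k).
Proof.
move=> ik; exists (1%:M + (Pm%:R * x) *: delta_mx i k).
split; first split.
- exact: det_elem.
- by move=> u w; rewrite [1%:M + _]addrC addrK !mxE; apply: JMr; apply: JMr; apply: Jnat.
by move=> u w; rewrite [1%:M + _]addrC addrK !mxE -mulrA subrr; apply: J0.
Qed.

Lemma SN x (i l : 'I_n) : i != l ->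
  S (x *: (delta_mx i i + delta_mx i l - delta_mx l i - delta_mx l l)).
Proof.
move=> il; exists (1%:M + (Pm%:R * x) *: (delta_mx i i + delta_mx i l - delta_mx l i - delta_mx l l)).
split; first split.
- have li : l != i by rewrite eq_sym.
  by rewrite -prod_formula // !mulmxE !detM !det_elem ?mulr1.
- move=> u w; rewrite [1%:M + _]addrC addrK; move: (delta_mx i i + _ - _ - _) => N.
  by rewrite !mxE; apply: JMr; apply: JMr; apply: Jnat.
move=> u w; rewrite [1%:M + _]addrC addrK; move: (delta_mx i i + _ - _ - _) => N.
by rewrite !mxE -mulrA subrr; apply: J0.
Qed.

Lemma Sdiag x (i l : 'I_n) : i != l -> S (x *: (delta_mx i i - delta_mx l l)).
Proof.
move=> il.
have -> : x *: (delta_mx i i - delta_mx l l) =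
  x *: (delta_mx i i + delta_mx i l - delta_mx l i - delta_mx l l) +
  (- x) *: delta_mx i l + x *: delta_mx l i :> 'M[R]_n.
  by apply/matrixP => u w; rewrite !mxE; ring.
apply: SD; first apply: SD.
- exact: SN.
- exact: Selem.
by apply: Selem; rewrite eq_sym.
Qed.

Lemma ker1 A : in_Gamma p (r + s) A -> forall i k, J s (Xe A i k).
Proof.
case=> _ h i k; have [y hy] := h i k.
have : (A - 1%:M) i k = Pm%:R * ((p ^ s)%N%:R * y) by rewrite hy expnD natrM mulrA.
by move/XeP ->; exists y.
Qed.

Lemma ker2 A (l : 'I_n) : in_Gamma p r A ->
  (forall i k, ~~ ((i == l) && (k == l)) -> J s (Xe A i k)) -> in_Gamma p (r + s) A.
Proof.
move=> hA hJ; have eA := @XeG A hA.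
have Jall : forall i k, J s (Xe A i k).
  move=> i k; case: (boolP ((i == l) && (k == l))) => [/andP[/eqP-> /eqP->]|]; last exact: hJ.
  apply: Jdiv; rewrite -eA.
  have hN : forall u w, J (r + s) ((A - (1%:M + ((A - 1%:M) l l) *: delta_mx l l)) u w).
    move=> u w.
    have -> : (A - (1%:M + ((A - 1%:M) l l) *: delta_mx l l)) u w =
       (A - 1%:M) u w - (A - 1%:M) l l * ((u == l) && (w == l))%:R.
      by rewrite !mxE; ring.
    case: (boolP ((u == l) && (w == l))) => [/andP[/eqP-> /eqP->]|nl].
      by rewrite mulr1 subrr; apply: J0.
    by rewrite mulr0 subr0 eA; apply: JPm; apply: hJ.
  have := @det_cong R p (r + s) n (1%:M + ((A - 1%:M) l l) *: delta_mx l l) _ hN.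
  have e : (1%:M + ((A - 1%:M) l l) *: delta_mx l l) + (A - (1%:M + ((A - 1%:M) l l) *: delta_mx l l)) = A by rewrite [LHS]addrC subrK.
  rewrite e det_diag1; case: hA => -> _.
  move/JN; congr (J _ _); ring.
split; first by case: hA.
by move=> i k; rewrite eA; apply: JPm.
Qed.

Definition Tm (y : 'I_n -> 'I_n -> R) (l : 'I_n) : 'M[R]_n :=
  \sum_i \sum_k (if i == k then (if i == l then 0 else y i i *: (delta_mx i i - delta_mx l l))
                  else y i k *: delta_mx i k).

Lemma TmS y l : S (Tm y l).
Proof.
apply: Ssum => i _; apply: Ssum => k _.
case: eqP => [_|/eqP ik]; last exact: Selem.
case: eqP => [_|/eqP il]; [exact: S0 | exact: Sdiag].
Qed.

Lemma TmE y l a c : ~~ ((a == l) && (c == l)) -> Tm y l a c = y a c.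
Proof.
move=> nl; rewrite /Tm summxE.
have h : forall i k, (if i == k then (if i == l then 0 else y i i *: (delta_mx i i - delta_mx l l))
                  else y i k *: delta_mx i k) a c = if (i == a) && (k == c) then y a c else 0.
  move=> i k; case: eqP => [<-|/eqP ik].
    case: eqP => [il|/eqP il].
      rewrite mxE; case: eqP => [ia|] //; case: eqP => [ic|] //=.
      by move: nl; rewrite -ia -ic il eqxx.
    rewrite !mxE (negbTE nl) subr0 (eq_sym a) (eq_sym c).
    case E: ((i == a) && (i == c)); last by rewrite mulr0.
    by move/andP: E => [/eqP <- /eqP <-]; rewrite mulr1.
  rewrite !mxE (eq_sym a) (eq_sym c).
  case E: ((i == a) && (k == c)); last by rewrite mulr0.
  by move/andP: E => [/eqP <- /eqP <-]; rewrite mulr1.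
under eq_bigr do rewrite summxE; under eq_bigr do under eq_bigr do rewrite h.
have inner : forall i, \sum_k (if (i == a) && (k == c) then y a c else 0) = if i == a then y a c else 0.
  move=> i; case: (i == a) => /=; last by rewrite big1.
  by rewrite (bigD1 c) //= eqxx big1 ?addr0 // => k /negbTE ->.
under eq_bigr do rewrite inner.
by rewrite -big_mkcond big_pred1_eq.
Qed.

Local Notation N := (n ^ 2 - 1)%N.
Local Notation q := (p ^ s)%N.

Lemma q_gt1 : (1 < q)%N.
Proof.
have p1 := prime_gt1 hp.
by apply: (leq_trans p1); rewrite -{1}(expn1 p) leq_pexp2l // ltnW.
Qed.

Definition phi (A : 'M[R]_n) (j : 'I_N) (v : I) : 'Z_q :=
  (bcoord b (Xe A (inord (j %/ n)) (inord (j %% n))) v)%:~R.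

Lemma idx_lt (j : 'I_N) : (j %/ n < n)%N /\ (j %% n < n)%N.
Proof. have := ltn_ord j; split; [rewrite ltn_divLR //; lia | lia]. Qed.

Lemma idx_nl (j : 'I_N) :
  ~~ (((inord (j %/ n) : 'I_n) == ord_max) && ((inord (j %% n) : 'I_n) == ord_max)).
Proof.
have [h1 h2] := idx_lt j; apply/negP => /andP[/eqP e1 /eqP e2].
have := congr1 val e1; have := congr1 val e2; rewrite /= !inordK // => f2 f1.
have := ltn_ord j; lia.
Qed.

Lemma phi_supp A : fin_supp (phi A).
Proof.
exists (flatten [seq (brep b (Xe A (inord (j %/ n)) (inord (j %% n)))).1 | j : 'I_N <- enum 'I_N]).
move=> j v h; apply/flatten_mapP; exists j; first by rewrite mem_enum.
apply: coord_supp; apply: contra h => /eqP; rewrite /phi => ->; by rewrite mulr0z.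
Qed.

Lemma phi_hom A B : in_Gamma p r A -> in_Gamma p r B ->
  forall j v, phi (A *m B) j v = phi A j v + phi B j v.
Proof.
move=> hA hB j v; rewrite /phi (@XeM A B hA hB) !(coordD hb) mulr_natl (coordMn hb) !intrD.
have -> : ((bcoord b (\sum_j0 Xe A (inord (j %/ n)) j0 * Xe B j0 (inord (j %% n))) v *+ Pm)%:~R
   : 'Z_q) = 0.
  apply/Zq_eq0; first exact: q_gt1.
  rewrite pmulrn mulrzz; apply: dvdz_mull; rewrite dvdzE /=; exact: dvdn_exp2l.
by rewrite addr0.
Qed.

Lemma phi_ker A : in_Gamma p r A ->
  ((forall j v, phi A j v = 0) <-> in_Gamma p (r + s) A).
Proof.
move=> hA; split.
  move=> h; apply: (@ker2 A ord_max hA) => a c nl.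
  apply/(J_coord hb) => v.
  have jlt : (a * n + c < N)%N.
    have := ltn_ord a; have := ltn_ord c; move: nl.
    rewrite -!val_eqE /= => /nandP [/eqP na|/eqP na] cn an; nia.
  have := h (Ordinal jlt) v; rewrite /phi /=.
  have -> : (inord ((a * n + c) %/ n) : 'I_n) = a.
    by apply: val_inj; rewrite /= inordK divnMDl // divn_small // addn0.
  have -> : (inord ((a * n + c) %% n) : 'I_n) = c.
    by apply: val_inj; rewrite /= inordK modnMDl modn_small.
  by move/Zq_eq0 => /(_ q_gt1).
move=> h j v; apply/Zq_eq0; first exact: q_gt1.
by have := @ker1 A h (inord (j %/ n)) (inord (j %% n)); move/(J_coord hb).
Qed.

Lemma phi_surj f : fin_supp f -> exists2 A, in_Gamma p r A & forall j v, phi A j v = f j v.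
Proof.
case=> e he; set E := undup e.
pose xj (j : 'I_N) := bcomb b E (fun v => Posz (f j v : nat)).
pose xf (m : nat) := if (insub m : option 'I_N) is Some j then xj j else 0.
pose y (a c : 'I_n) := xf (a * n + c)%N.
have [A [hA hJ]] := TmS y ord_max.
exists A => // j v.
set a : 'I_n := inord (j %/ n); set c : 'I_n := inord (j %% n).
have nl := idx_nl j.
have := hJ a c; rewrite (@XeG A hA) (@TmE y ord_max a c nl) -mulrBr => /Jdiv /(J_coord hb) /(_ v).
rewrite (coordB hb) => /(@Zq_cong q _ _ q_gt1); rewrite /phi -/a -/c => ->.
have -> : y a c = xj j.
  have [h1 h2] := idx_lt j.
  rewrite /y /a /c !inordK // -divn_eq /xf.
  case: insubP => [j' _ hj'|]; last by rewrite ltn_ord.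
  by congr (xj _); apply: val_inj.
rewrite /xj (coord_comb hb) (grp_uniq _ _ _ (undup_uniq e)).
case: ifP => vE; first by rewrite -pmulrn natr_Zp.
have -> : f j v = 0.
  by apply/eqP; apply: contraFT vE => /he; rewrite mem_undup.
by rewrite mulr0z.
Qed.

End Mat.

Theorem theorem3p5 (R : comPzRingType) (I : eqType) (b : I -> R)
    (n p r s : nat) :
  is_Zbasis b -> (2 <= n)%N -> prime p ->
  ((exists e : seq I, forall v : I, v \in e) \/ s = 1%N) ->
  (1 <= s)%N -> (s <= r)%N ->
  exists phi : 'M[R]_n -> 'I_(n ^ 2 - 1) -> I -> 'Z_(p ^ s),
    [/\ forall A, in_Gamma p r A -> fin_supp (phi A),
        forall A B, in_Gamma p r A -> in_Gamma p r B ->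
          forall j v, phi (A *m B) j v = phi A j v + phi B j v,
        forall f, fin_supp f ->
          exists2 A, in_Gamma p r A & forall j v, phi A j v = f j v
      & forall A, in_Gamma p r A ->
          ((forall j v, phi A j v = 0) <-> in_Gamma p (r + s) A)].
Proof.
move=> hb n2 hp _ s0 sr.
case: n n2 => [|[|n']] // _.
exists (@phi R I b p r s n'.+1); split.
- by move=> A _; apply: phi_supp.
- by move=> A B hA hB; apply: phi_hom.
- by move=> f hf; apply: phi_surj.
by move=> A hA; apply: phi_ker.
Qed.
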